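(* Let $r>0$, $\alpha\in(0,1]$, $K>0$, $\delta>0$, $\sigma>0$, and consider the system \[ \dot p = rm\Big(1-\frac{p+m}{K}\Big)-\delta p,\qquad \dot m=\alpha r p\Big(1-\frac{p+m}{K}\Big)-\sigma m \] on $\Omega=\{(p,m)\in\mathbb{R}^2:\ p\ge0,\ m\ge0,\ p+m\le K\}$. If $R_0=r\sqrt{\alpha/(\delta\sigma)}\le 1$, then the equilibrium $E_0=(0,0)$ is globally asymptotically stable in $\Omega$. *)

(* Defs.v *)
From Stdlib Require Import Reals.
Open Scope R_scope.

Definition fp (r K delta : R) (p m : R) : R := r * m * (1 - (p + m) / K) - delta * p.
Definition gm (r alpha K sigma : R) (p m : R) : R :=
  alpha * r * p * (1 - (p + m) / K) - sigma * m.

Definition Omega (K p m : R) : Prop := 0 <= p /\ 0 <= m /\ p + m <= K.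

Definition repro_num (r alpha delta sigma : R) : R := r * sqrt (alpha / (delta * sigma)).

Definition is_solution (r alpha K delta sigma : R) (p m : R -> R) : Prop :=
  forall t, 0 <= t ->
    derivable_pt_lim p t (fp r K delta (p t) (m t)) /\
    derivable_pt_lim m t (gm r alpha K sigma (p t) (m t)).

Definition norm2 (x y : R) : R := sqrt (x ^ 2 + y ^ 2).

Definition GAS_E0_in_Omega (r alpha K delta sigma : R) : Prop :=
  (forall eps, 0 < eps -> exists eta, 0 < eta /\
     forall p m, is_solution r alpha K delta sigma p m ->
       Omega K (p 0) (m 0) -> norm2 (p 0) (m 0) < eta ->
       forall t, 0 <= t -> norm2 (p t) (m t) < eps)
  /\
  (forall p m, is_solution r alpha K delta sigma p m ->
     Omega K (p 0) (m 0) ->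
     forall eps, 0 < eps -> exists T, forall t, T <= t -> norm2 (p t) (m t) < eps).

(* Main.v *)
From Stdlib Require Import Reals Lra Psatz.
Require Import Defs.
Open Scope R_scope.



Lemma dext (f g : R -> R) x l l' : (forall y, f y = g y) -> l = l' ->
  derivable_pt_lim g x l -> derivable_pt_lim f x l'.
Proof. intros H <- D e he. destruct (D e he) as [d Hd]. exists d. intros h h0 hd.
  rewrite !H. apply Hd; auto. Qed.

Definition phi (x : R) := (Rmin x 0) ^ 2.

Lemma phi_ineq x h : Rabs (phi (x+h) - phi x - 2 * Rmin x 0 * h) <= h^2.
Proof. unfold phi, Rmin. apply Rabs_le.
  destruct (Rle_dec (x+h) 0); destruct (Rle_dec x 0); split; nra. Qed.

Lemma phi_deriv x : derivable_pt_lim phi x (2 * Rmin x 0).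
Proof. intros e he. exists (mkposreal e he). intros h h0 hd. simpl in hd.
  assert (Ha: Rabs h > 0) by (apply Rabs_pos_lt; auto).
  replace ((phi (x + h) - phi x) / h - 2 * Rmin x 0) with
    ((phi (x+h) - phi x - 2 * Rmin x 0 * h) / h) by (field; auto).
  unfold Rdiv. rewrite Rabs_mult, Rabs_inv.
  apply Rle_lt_trans with (h^2 * / Rabs h).
  - apply Rmult_le_compat_r. left; apply Rinv_0_lt_compat; lra. apply phi_ineq.
  - replace (h^2) with (Rabs h * Rabs h).
    + field_simplify; lra.
    + rewrite <- Rabs_mult. rewrite Rabs_right. ring. nra. Qed.

Lemma phi_ge0 x : 0 <= phi x.
Proof. unfold phi. nra. Qed.

Lemma phi_zero x : phi x <= 0 -> 0 <= x.
Proof. unfold phi, Rmin. destruct (Rle_dec x 0); nra. Qed.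

Lemma phi_nonneg x : 0 <= x -> phi x = 0.
Proof. unfold phi, Rmin. destruct (Rle_dec x 0); intros; [replace x with 0 by lra|]; ring. Qed.

Lemma decr (F F' : R -> R) T : 0 <= T ->
  (forall t, 0 <= t <= T -> derivable_pt_lim F t (F' t)) ->
  (forall t, 0 <= t <= T -> F' t <= 0) -> F T <= F 0.
Proof. intros hT D N. destruct (Rle_lt_dec T 0) as [h|h].
  - destruct (Rle_lt_dec 0 T). replace T with 0 by lra; lra.
    
    lra.
  - destruct (MVT_cor2 F F' 0 T h) as [c [Hc1 Hc2]].
    intros c Hc; apply D; lra.
    assert (F' c <= 0) by (apply N; lra). nra.
Qed.


Lemma H1 a m q Bm Bq : a <= 0 -> -Bm <= m <= Bm -> -Bq <= q <= Bq ->
  a*m*q <= -a*(Bq*(- Rmin m 0) + Bm*(- Rmin q 0)).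
Proof. intros. assert (0<=Bm) by lra. assert (0<=Bq) by lra. unfold Rmin. destruct (Rle_dec m 0); destruct (Rle_dec q 0).
 - assert (0 <= a*m) by nra. assert (0 <= a*q) by nra. nra.
 - assert (0 <= a*m) by nra. nra.
 - assert (0 <= a*q) by nra. nra.
 - assert (a*m <= 0) by nra. nra.
Qed.
Lemma minmul x : Rmin x 0 * x = Rmin x 0 * Rmin x 0.
Proof. unfold Rmin; destruct (Rle_dec x 0); ring. Qed.
Lemma minle x : Rmin x 0 <= x /\ Rmin x 0 <= 0.
Proof. unfold Rmin; destruct (Rle_dec x 0); lra. Qed.
Lemma sumbound k1 k2 k3 k4 k5 k6 k7 X1 X2 X3 X4 X5 X6 X7 S :
  0<=k1 -> 0<=k2 -> 0<=k3 -> 0<=k4 -> 0<=k5 -> 0<=k6 -> 0<=k7 ->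
  X1<=S -> X2<=S -> X3<=S -> X4<=S -> X5<=S -> X6<=S -> X7<=S ->
  k1*X1+k2*X2+k3*X3+k4*X4+k5*X5+k6*X6+k7*X7 <= (k1+k2+k3+k4+k5+k6+k7)*S.
Proof. intros. nra. Qed.

Lemma Rabs_le_inv x b : Rabs x <= b -> -b <= x <= b.
Proof. intros H. pose proof (Rle_abs x). pose proof (Rle_abs (-x)). rewrite Rabs_Ropp in *. lra. Qed.

Lemma Rdiv_le_0_compat x y : 0 <= x -> 0 < y -> 0 <= x / y.
Proof. intros. unfold Rdiv. apply Rmult_le_pos; auto. left; apply Rinv_0_lt_compat; auto. Qed.

Definition Lc r alpha K delta sigma B :=
  2 * (r/K*(K+2*B) + r/K*B + alpha*r/K*(K+2*B) + alpha*r/K*B + (r+alpha*r)*B/K + delta + sigma).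

Lemma key r alpha K delta sigma B p m : 0<r -> 0<alpha -> 0<K -> 0<delta -> 0<sigma ->
  Rabs p <= B -> Rabs m <= B ->
  let fpv := r * m * (1 - (p + m) / K) - delta * p in
  let gmv := alpha * r * p * (1 - (p + m) / K) - sigma * m in
  2 * Rmin p 0 * fpv + 2 * Rmin m 0 * gmv + 2 * Rmin (K - p - m) 0 * (- fpv - gmv)
  <= Lc r alpha K delta sigma B * ((Rmin p 0)^2 + (Rmin m 0)^2 + (Rmin (K-p-m) 0)^2).
Proof. intros hr ha hK hd hs Hp Hm fpv gmv.
  apply Rabs_le_inv in Hp. apply Rabs_le_inv in Hm.
  assert (0 <= B) by lra.
  set (q := K - p - m).
  assert (Hq : -(K+2*B) <= q <= K+2*B) by (unfold q; lra).
  set (a := Rmin p 0). set (b := Rmin m 0). set (c := Rmin q 0).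
  destruct (minle p) as [ap a0]. destruct (minle m) as [bm b0]. destruct (minle q) as [cq c0].
  fold a in ap, a0. fold b in bm, b0. fold c in cq, c0.
  assert (Ea : a * p = a*a) by apply minmul.
  assert (Eb : b * m = b*b) by apply minmul.
  assert (Ec : c * q = c*c) by apply minmul.
  assert (F1 : fpv = r/K*(m*q) - delta*p) by (unfold fpv, q; field; lra).
  assert (G1 : gmv = alpha*r/K*(p*q) - sigma*m) by (unfold gmv, q; field; lra).
  assert (A1 : a*m*q <= -a*((K+2*B)*(-b) + B*(-c))) by (apply H1; lra).
  assert (A2 : b*p*q <= -b*((K+2*B)*(-a) + B*(-c))) by (apply H1; lra).
  assert (T1 : a*fpv <= r/K*((K+2*B)*(a*b) + B*(a*c))).
  { rewrite F1. assert (0 <= r/K) by (apply Rdiv_le_0_compat; lra).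
    assert (a*(r/K*(m*q)) <= r/K*((K+2*B)*(a*b) + B*(a*c))).
    { replace (a*(r/K*(m*q))) with (r/K*(a*m*q)) by ring. apply Rmult_le_compat_l; auto. nra. }
    nra. }
  assert (T2 : b*gmv <= alpha*r/K*((K+2*B)*(a*b) + B*(b*c))).
  { rewrite G1. assert (0 <= alpha*r/K) by (apply Rdiv_le_0_compat; nra).
    assert (b*(alpha*r/K*(p*q)) <= alpha*r/K*((K+2*B)*(a*b) + B*(b*c))).
    { replace (b*(alpha*r/K*(p*q))) with (alpha*r/K*(b*p*q)) by ring. apply Rmult_le_compat_l; auto. nra. }
    nra. }
  assert (T3 : c*(-fpv-gmv) <= (r+alpha*r)*B/K*(c*c) + delta*(a*c) + sigma*(b*c)).
  { rewrite F1, G1.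
    replace (c*(-(r/K*(m*q) - delta*p) - (alpha*r/K*(p*q) - sigma*m)))
      with (-(r*m+alpha*r*p)/K*(c*q) + delta*(c*p) + sigma*(c*m)) by (field; lra).
    rewrite Ec.
    assert (-(r*m+alpha*r*p)/K <= (r+alpha*r)*B/K).
    { unfold Rdiv. apply Rmult_le_compat_r. left; apply Rinv_0_lt_compat; lra.
      assert (0 <= alpha*r) by nra. assert (0<= r*(m+B)) by nra. assert (0 <= alpha*r*(p+B)) by nra. nra. }
    assert (c*p <= a*c) by nra. assert (c*m <= b*c) by nra.
    assert (0 <= c*c) by nra. nra. }
  set (S := a^2+b^2+c^2).
  assert (0 <= r/K) by (apply Rdiv_le_0_compat; lra).
  assert (0 <= alpha*r/K) by (apply Rdiv_le_0_compat; nra).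
  assert (0 <= (r+alpha*r)*B/K) by (apply Rdiv_le_0_compat; [apply Rmult_le_pos; nra|lra]).
  pose proof (sumbound (r/K*(K+2*B)) (r/K*B) (alpha*r/K*(K+2*B)) (alpha*r/K*B) ((r+alpha*r)*B/K) delta sigma
     (a*b) (a*c) (a*b) (b*c) (c*c) (a*c) (b*c) S) as SB.
  assert (a*b <= S) by (unfold S; nra). assert (a*c <= S) by (unfold S; nra).
  assert (b*c <= S) by (unfold S; nra). assert (c*c <= S) by (unfold S; nra).
  unfold Lc. fold S.
  assert (HH0: 0 <= r/K*(K+2*B)) by nra. assert (0 <= r/K*B) by nra.
  assert (0 <= alpha*r/K*(K+2*B)) by nra. assert (0 <= alpha*r/K*B) by nra.
  specialize (SB HH0 ltac:(auto) ltac:(auto) ltac:(auto) ltac:(auto) ltac:(lra) ltac:(lra)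
    ltac:(auto) ltac:(auto) ltac:(auto) ltac:(auto) ltac:(auto) ltac:(auto) ltac:(auto)).
  nra.
Qed.
Lemma cont_of (f : R -> R) t l : derivable_pt_lim f t l -> continuity_pt f t.
Proof. intros H. apply derivable_continuous_pt. exists l. exact H. Qed.

Lemma invariance r alpha K delta sigma p m :
  0 < r -> 0 < alpha -> 0 < K -> 0 < delta -> 0 < sigma ->
  is_solution r alpha K delta sigma p m -> Omega K (p 0) (m 0) ->
  forall T, 0 <= T -> Omega K (p T) (m T).
Proof.
  intros hr ha hK hd hs Hs H0 T hT.
  destruct (continuity_ab_maj (fun s => Rabs (p s) + Rabs (m s)) 0 T hT) as [Mx [HM _]].
  { intros c hc. change (continuity_pt (plus_fct (comp Rabs p) (comp Rabs m)) c).
    destruct (Hs c ltac:(lra)) as [D1 D2].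
    apply continuity_pt_plus; apply continuity_pt_comp; try apply Rcontinuity_abs.
    eapply cont_of; eauto. eapply cont_of; eauto. }
  set (B := Rabs (p Mx) + Rabs (m Mx)) in HM.
  set (L := Lc r alpha K delta sigma B).
  set (N := fun s => phi (p s) + phi (m s) + phi (K - p s - m s)).
  set (N' := fun s =>
     2 * Rmin (p s) 0 * fp r K delta (p s) (m s) + 2 * Rmin (m s) 0 * gm r alpha K sigma (p s) (m s)
     + 2 * Rmin (K - p s - m s) 0 * (- fp r K delta (p s) (m s) - gm r alpha K sigma (p s) (m s))).
  assert (DN : forall s, 0 <= s -> derivable_pt_lim N s (N' s)).
  { intros s hs0. destruct (Hs s hs0) as [D1 D2].
    assert (Dq : derivable_pt_lim (fun u => K - p u - m u) s (- fp r K delta (p s) (m s) - gm r alpha K sigma (p s) (m s))).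
    { eapply (dext _ (minus_fct (minus_fct (fct_cte K) p) m)). intro; reflexivity.
      2: { apply derivable_pt_lim_minus; [apply derivable_pt_lim_minus|]; eauto. apply derivable_pt_lim_const. }
      ring. }
    eapply (dext _ (plus_fct (plus_fct (comp phi p) (comp phi m)) (comp phi (fun u => K - p u - m u)))).
    intro; reflexivity.
    2: { apply derivable_pt_lim_plus; [apply derivable_pt_lim_plus|];
         eapply derivable_pt_lim_comp; eauto; apply phi_deriv. }
    unfold N'. ring. }
  set (F := fun s => exp (- L * s) * N s).
  set (F' := fun s => - L * exp (- L * s) * N s + exp (- L * s) * N' s).
  assert (DF : forall s, 0 <= s <= T -> derivable_pt_lim F s (F' s)).
  { intros s hs0.
    assert (De : derivable_pt_lim (fun u => exp (- L * u)) s (exp (- L * s) * - L)).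
    { eapply (dext _ (comp exp (mult_real_fct (- L) id))). intro; reflexivity. reflexivity.
      eapply (dext _ _ _ _ _ (fun _ => eq_refl)). 2: { apply derivable_pt_lim_comp.
        apply derivable_pt_lim_scal. apply derivable_pt_lim_id. apply derivable_pt_lim_exp. }
      unfold mult_real_fct, id. ring. }
    eapply (dext _ (mult_fct (fun u => exp (- L * u)) N)). intro; reflexivity.
    2: { apply derivable_pt_lim_mult. exact De. apply DN; lra. }
    unfold F'. ring. }
  assert (NF : forall s, 0 <= s <= T -> F' s <= 0).
  { intros s hs0. unfold F'.
    assert (K1 : N' s <= L * N s).
    { unfold N', N, L, phi, fp, gm. apply key; auto.
      - specialize (HM s hs0). simpl in HM. fold B in HM. pose proof (Rabs_pos (m s)). lra.
      - specialize (HM s hs0). simpl in HM. fold B in HM. pose proof (Rabs_pos (p s)). lra. }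
    pose proof (exp_pos (- L * s)). nra. }
  pose proof (decr F F' T hT DF NF) as HFT.
  assert (N0 : N 0 = 0).
  { destruct H0 as [h1 [h2 h3]]. unfold N. rewrite !phi_nonneg; lra. }
  unfold F at 2 in HFT. rewrite N0, Rmult_0_r in HFT. unfold F in HFT.
  pose proof (exp_pos (- L * T)).
  assert (HNT : N T <= 0) by nra.
  unfold N in HNT. pose proof (phi_ge0 (p T)). pose proof (phi_ge0 (m T)). pose proof (phi_ge0 (K - p T - m T)).
  assert (A1 : 0 <= p T) by (apply phi_zero; lra).
  assert (A2 : 0 <= m T) by (apply phi_zero; lra).
  assert (A3 : 0 <= K - p T - m T) by (apply phi_zero; lra).
  unfold Omega; lra.
Qed.
Lemma norm_le x y : 0 <= x -> 0 <= y -> norm2 x y <= x + y.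
Proof. intros. unfold norm2. rewrite <- (sqrt_pow2 (x+y)) by lra.
  apply sqrt_le_1_alt. nra. Qed.
Lemma norm_ge1 x y : 0 <= x -> x <= norm2 x y.
Proof. intros. unfold norm2. rewrite <- (sqrt_pow2 x) at 1 by lra.
  apply sqrt_le_1_alt. nra. Qed.
Lemma norm_ge x y : 0 <= x -> 0 <= y -> x + y <= 2 * norm2 x y.
Proof. intros. pose proof (norm_ge1 x y H). pose proof (norm_ge1 y x H0).
  unfold norm2 in *. match goal with H : y <= _ |- _ => rewrite (Rplus_comm (y^2)) in H end. lra. Qed.

Lemma lyap r alpha K delta sigma p m : 0<r -> 0<alpha -> 0<K -> 0<delta -> 0<sigma ->
  alpha * r^2 <= delta * sigma -> Omega K p m ->
  sigma * fp r K delta p m + r * gm r alpha K sigma p m <=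
  - (delta*sigma/((delta+sigma)*(sigma+r)*K)) * (sigma*p + r*m)^2.
Proof. intros hr ha hK hd hs hR [hp [hm hpm]]. unfold fp, gm.
  set (s := 1 - (p+m)/K).
  assert (Es : (p+m)/K = 1 - s) by (unfold s; ring).
  assert (hs1 : (p+m)/K <= 1) by (apply (Rmult_le_reg_r K); [lra|]; unfold Rdiv; rewrite Rmult_assoc, Rinv_l; lra).
  assert (hs2 : 0 <= (p+m)/K) by (apply Rdiv_le_0_compat; lra).
  set (V := sigma*p + r*m).
  assert (E1 : sigma * (r * m * s - delta * p) + r * (alpha * r * p * s - sigma * m)
     <= - ((p+m)/K) * (sigma*delta*p + r*sigma*m)).
  { rewrite Es. assert (alpha*r^2*s <= delta*sigma*s) by nra.
    assert (p*(alpha*r^2*s) <= p*(delta*sigma*s)) by nra. nra. }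
  assert (I1 : V <= (sigma+r)*(p+m)) by (unfold V; nra).
  assert (0 <= delta*delta*sigma*p) by (repeat apply Rmult_le_pos; lra).
  assert (0 <= sigma*sigma*r*m) by (repeat apply Rmult_le_pos; lra).
  assert (I2 : delta*sigma*V <= (delta+sigma)*(sigma*delta*p + r*sigma*m)) by (unfold V; nra).
  assert (V0 : 0 <= V) by (unfold V; nra).
  assert (I3 : V * (delta*sigma*V) <= (sigma+r)*(p+m) * ((delta+sigma)*(sigma*delta*p + r*sigma*m))).
  { assert (0 <= delta*sigma) by nra. apply Rmult_le_compat; auto. apply Rmult_le_pos; auto. }
  assert (I4 : delta*sigma/((delta+sigma)*(sigma+r)*K) * V^2 <= (p+m)/K * (sigma*delta*p + r*sigma*m)).
  { assert (0 < (delta+sigma)*(sigma+r)*K) by (apply Rmult_lt_0_compat; nra).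
    apply (Rmult_le_reg_l ((delta+sigma)*(sigma+r)*K)); auto.
    replace ((delta + sigma) * (sigma + r) * K * (delta * sigma / ((delta + sigma) * (sigma + r) * K) * V ^ 2))
      with (V * (delta*sigma*V)) by (field; lra).
    replace ((delta + sigma) * (sigma + r) * K * ((p + m) / K * (sigma * delta * p + r * sigma * m)))
      with ((sigma+r)*(p+m) * ((delta+sigma)*(sigma*delta*p + r*sigma*m))) by (field; lra).
    auto. }
  fold V. lra.
Qed.

Lemma R0_bound r alpha delta sigma : 0 < r -> 0 < alpha -> 0 < delta -> 0 < sigma ->
  repro_num r alpha delta sigma <= 1 -> alpha * r^2 <= delta * sigma.
Proof. intros hr ha hd hs H. unfold repro_num in H.
  assert (0 <= alpha/(delta*sigma)) by (apply Rdiv_le_0_compat; nra).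
  pose proof (sqrt_pos (alpha/(delta*sigma))).
  assert (0 <= r * sqrt (alpha / (delta * sigma))) by (apply Rmult_le_pos; lra).
  assert (HR2 : (r * sqrt (alpha / (delta * sigma)))^2 <= 1) by nra.
  replace ((r * sqrt (alpha / (delta * sigma)))^2) with (r^2 * (alpha/(delta*sigma))) in HR2
    by (rewrite Rpow_mult_distr, pow2_sqrt; auto).
  assert (0 < delta*sigma) by nra.
  apply (Rmult_le_compat_r (delta*sigma)) in HR2; [|lra].
  replace (r ^ 2 * (alpha / (delta * sigma)) * (delta * sigma)) with (alpha*r^2) in HR2 by (field; lra).
  lra.
Qed.

Theorem mainTheorem3 (r alpha K delta sigma : R) :
  0 < r -> 0 < alpha -> alpha <= 1 -> 0 < K -> 0 < delta -> 0 < sigma ->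
  repro_num r alpha delta sigma <= 1 ->
  GAS_E0_in_Omega r alpha K delta sigma.
Proof.
  intros hr ha ha1 hK hd hs hR0.
  pose proof (R0_bound r alpha delta sigma hr ha hd hs hR0) as hR.
  set (c := delta*sigma/((delta+sigma)*(sigma+r)*K)).
  assert (hc : 0 < c).
  { unfold c. apply Rdiv_lt_0_compat; [nra|]. repeat apply Rmult_lt_0_compat; lra. }
  assert (Common : forall p m, is_solution r alpha K delta sigma p m -> Omega K (p 0) (m 0) ->
     (forall t, 0 <= t -> Omega K (p t) (m t)) /\
     (forall t, 0 <= t -> derivable_pt_lim (fun s => sigma * p s + r * m s) t
        (sigma * fp r K delta (p t) (m t) + r * gm r alpha K sigma (p t) (m t))) /\
     (forall t, 0 <= t -> sigma * fp r K delta (p t) (m t) + r * gm r alpha K sigma (p t) (m t)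
        <= - c * (sigma * p t + r * m t)^2)).
  { intros p m Hs H0.
    pose proof (invariance r alpha K delta sigma p m hr ha hK hd hs Hs H0) as Inv.
    split; [exact Inv|split].
    - intros t ht. destruct (Hs t ht) as [D1 D2].
      eapply (dext _ (plus_fct (mult_real_fct sigma p) (mult_real_fct r m))). intro; reflexivity.
      reflexivity. apply derivable_pt_lim_plus; apply derivable_pt_lim_scal; auto.
    - intros t ht. apply lyap; auto. }
  set (k1 := 1/sigma + 1/r).
  assert (hk1 : 0 < k1) by (unfold k1; assert (0 < 1/sigma) by (apply Rdiv_lt_0_compat; lra);
     assert (0 < 1/r) by (apply Rdiv_lt_0_compat; lra); lra).
  assert (NormV : forall x y, 0 <= x -> 0 <= y -> norm2 x y <= k1 * (sigma*x + r*y)).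
  { intros x y hx hy. eapply Rle_trans. apply norm_le; auto.
    unfold k1. replace ((1 / sigma + 1 / r) * (sigma * x + r * y)) with (x + y + (r/sigma*y + sigma/r*x)) by (field; lra).
    assert (0 <= r/sigma*y) by (apply Rmult_le_pos; [apply Rdiv_le_0_compat|]; lra).
    assert (0 <= sigma/r*x) by (apply Rmult_le_pos; [apply Rdiv_le_0_compat|]; lra). lra. }
  split.
  - intros eps he.
    set (k := k1 * (sigma + r) * 2).
    assert (hk : 0 < k) by (unfold k; nra).
    exists (eps / k). split. apply Rdiv_lt_0_compat; lra.
    intros p m Hs H0 Hn t ht.
    destruct (Common p m Hs H0) as [Inv [DV LV]].
    assert (Vdec : sigma * p t + r * m t <= sigma * p 0 + r * m 0).
    { apply (decr (fun s => sigma * p s + r * m s)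
        (fun s => sigma * fp r K delta (p s) (m s) + r * gm r alpha K sigma (p s) (m s)) t ht).
      intros s hs0; apply DV; lra.
      intros s hs0. eapply Rle_trans. apply LV; lra. pose proof (pow2_ge_0 (sigma * p s + r * m s)). nra. }
    destruct (Inv t ht) as [pt [mt _]]. destruct H0 as [p0 [m0 _]].
    assert (A1 : sigma * p 0 + r * m 0 <= (sigma + r) * (2 * norm2 (p 0) (m 0))).
    { pose proof (norm_ge (p 0) (m 0) p0 m0). nra. }
    assert (A2 : (sigma + r) * (2 * norm2 (p 0) (m 0)) < (sigma + r) * (2 * (eps/k))).
    { apply Rmult_lt_compat_l; lra. }
    pose proof (NormV (p t) (m t) pt mt).
    assert (A3 : k1 * (sigma * p t + r * m t) < k1 * ((sigma + r) * (2 * (eps/k)))).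
    { apply Rmult_lt_compat_l; lra. }
    replace (k1 * ((sigma + r) * (2 * (eps/k)))) with eps in A3 by (unfold k; field; nra).
    lra.
  - intros p m Hs H0 eps he.
    destruct (Common p m Hs H0) as [Inv [DV LV]].
    set (V := fun s => sigma * p s + r * m s).
    set (V0 := V 0).
    assert (Vpos : forall t, 0 <= t -> 0 <= V t).
    { intros t ht. destruct (Inv t ht) as [a [b _]]. unfold V. nra. }
    set (G := fun s => V s * (1 + c * V0 * s) - V0).
    set (V' := fun s => sigma * fp r K delta (p s) (m s) + r * gm r alpha K sigma (p s) (m s)).
    set (G' := fun s => V' s * (1 + c * V0 * s) + V s * (c * V0)).
    assert (DG : forall s, 0 <= s -> derivable_pt_lim G s (G' s)).
    { intros s hs0.
      assert (D1 : derivable_pt_lim (fun u => 1 + c * V0 * u) s (c * V0)).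
      { eapply (dext _ (plus_fct (fct_cte 1) (mult_real_fct (c*V0) id))). intro; reflexivity.
        2: { apply derivable_pt_lim_plus. apply derivable_pt_lim_const. apply derivable_pt_lim_scal, derivable_pt_lim_id. }
        ring. }
      eapply (dext _ (minus_fct (mult_fct V (fun u => 1 + c * V0 * u)) (fct_cte V0))). intro; reflexivity.
      2: { apply derivable_pt_lim_minus. apply derivable_pt_lim_mult. apply DV; auto. exact D1.
           apply derivable_pt_lim_const. }
      unfold G', V'. ring. }
    set (H := fun s => phi (- G s)).
    set (H' := fun s => 2 * Rmin (- G s) 0 * (- G' s)).
    assert (Gle : forall t, 0 <= t -> G t <= 0).
    { intros t ht.
      assert (Ht : H t <= H 0).
      { apply (decr H H' t ht).
        - intros s hs0. eapply (dext _ (comp phi (opp_fct G))). intro; reflexivity.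
          2: { apply derivable_pt_lim_comp. apply derivable_pt_lim_opp. apply DG; lra. apply phi_deriv. }
          unfold H', opp_fct. ring.
        - intros s hs0. unfold H'. unfold Rmin. destruct (Rle_dec (- G s) 0) as [hg|hg]; [|lra].
          assert (G' s <= - c * V s * G s).
          { unfold G', G. specialize (LV s ltac:(lra)). fold (V' s) in LV. fold (V s) in LV.
            assert (0 <= 1 + c * V0 * s) by (pose proof (Vpos 0 ltac:(lra)) as HV0; fold V0 in HV0; assert (0 <= c*V0*s) by (apply Rmult_le_pos; [apply Rmult_le_pos|]; lra); lra).
            assert (V' s * (1 + c * V0 * s) <= - c * V s ^ 2 * (1 + c * V0 * s)) by nra.
            nra. }
          pose proof (Vpos s ltac:(lra)). assert (0 <= c * V s * G s) by (apply Rmult_le_pos; nra). nra. }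
      unfold H in Ht. assert (G0 : G 0 = 0) by (unfold G, V0; ring). rewrite G0 in Ht.
      replace (-0) with 0 in Ht by ring. rewrite (phi_nonneg 0) in Ht by lra.
      apply phi_zero in Ht. lra. }
    exists (2 * k1 / (c * eps)).
    intros t ht.
    assert (hT : 0 < 2 * k1 / (c * eps)) by (apply Rdiv_lt_0_compat; nra).
    assert (ht0 : 0 < t) by lra.
    destruct (Inv t ltac:(lra)) as [pt [mt _]].
    pose proof (NormV (p t) (m t) pt mt) as NV. fold (V t) in NV.
    pose proof (Gle t ltac:(lra)) as Gt. unfold G in Gt.
    pose proof (Vpos t ltac:(lra)) as HVt. pose proof (Vpos 0 ltac:(lra)) as HV0. fold V0 in HV0.
    assert (Vct : V t * (c * t) <= 1).
    { assert (Gt' : V t + V t * c * V0 * t <= V0).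
      { replace (V t + V t * c * V0 * t) with (V t * (1 + c * V0 * t)) by ring. lra. }
      destruct (Req_dec V0 0) as [z|z].
      - rewrite z in Gt'. assert (V t <= 0) by (rewrite Rmult_0_r, Rmult_0_l in Gt'; lra).
        assert (0 <= c * t) by nra. nra.
      - assert (V t * c * V0 * t <= V0) by nra.
        assert (0 < V0) by lra.
        apply (Rmult_le_reg_r V0); auto. nra. }
    assert (ct : 2 * k1 / eps <= c * t).
    { apply (Rmult_le_compat_l c) in ht; [|lra].
      replace (c * (2 * k1 / (c * eps))) with (2 * k1 / eps) in ht by (field; lra). lra. }
    assert (0 < 2*k1/eps) by (apply Rdiv_lt_0_compat; lra).
    assert (H4 : V t * (2 * k1 / eps) <= 1) by nra.
    assert (V t * k1 <= eps / 2).
    { replace (V t * (2 * k1 / eps)) with (V t * k1 * 2 / eps) in H4 by (field; lra).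
      apply (Rmult_le_compat_r eps) in H4; [|lra].
      replace (V t * k1 * 2 / eps * eps) with (V t * k1 * 2) in H4 by (field; lra). lra. }
    lra.
Qed.
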